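(* Let $(F,\cdot)$ be a scalar group. (1) If $(F,\boxplus,\cdot)$ is a left near-field, then the map $\rho_\boxplus:F\to F$, $\rho_\boxplus(\alpha)=1\boxplus\alpha$, is a left near-field addition map on $(F,\cdot)$. (2) If $\rho$ is a left near-field addition map on $(F,\cdot)$, then $(F,\boxplus_\rho,\cdot)$ is a left near-field, where $\alpha\boxplus_\rho\beta:=\alpha\,\rho(\alpha^{-1}\beta)$ if $\alpha\ne0$ and $0\boxplus_\rho\beta:=\beta$.
   Context: A scalar group is a tuple $(F,\cdot,1,0,-1)$ where $(F,\cdot,1)$ is a monoid, $0\ne1$, $0\alpha=\alpha0=0$, $\{1,-1\}$ is exactly the solution set of $x^2=1$, and $(F\setminus\{0\},\cdot)$ is a group; $-\alpha:=(-1)\alpha$. A left near-field $(F,\boxplus,\cdot)$: $(F,\boxplus)$ a group with identity $0$, $(F\setminus\{0\},\cdot)$ a group, $0\cdot\alpha=0$, $\gamma(\alpha\boxplus\beta)=\gamma\alpha\boxplus\gamma\beta$. A left near-field addition map on $(F,\cdot)$ is a map $\rho:F\to F$ such that (i) $\rho(0)=1$; (ii) $\rho(-1)=0$; (iii) $\rho(\alpha^{-1})=\alpha^{-1}\rho(\alpha)$ for all $\alpha\ne0$; (iv) $\rho(\alpha\rho(\beta))=\alpha\,\rho(\beta\,\rho((\alpha\beta)^{-1}))$ for all $\alpha,\beta\ne0$. *)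

(* Defs.v *)
From mathcomp Require Import ssreflect ssrfun ssrbool eqtype.
Set Implicit Arguments. Unset Strict Implicit. Unset Printing Implicit Defensive.

(* Scalar group (F, mul, one, zero, m1); [inv] is the inverse map of the
   group (F \ {0}, mul) (its value at 0 is irrelevant). *)
Definition scalar_group (F : eqType) (mul : F -> F -> F) (one zero m1 : F)
    (inv : F -> F) : Prop :=
  [/\
      ((forall a b c, mul a (mul b c) = mul (mul a b) c) /\
       (forall a, mul one a = a /\ mul a one = a)),
      zero <> one,
      (forall a, mul zero a = zero /\ mul a zero = zero),
      (forall x, mul x x = one <-> (x = one \/ x = m1)) &
      ((forall a b, a <> zero -> b <> zero -> mul a b <> zero) /\
       (forall a, a <> zero ->
         [/\ inv a <> zero, mul (inv a) a = one & mul a (inv a) = one]))].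

Definition left_nearfield (F : eqType) (add mul : F -> F -> F) (one zero : F)
    (inv : F -> F) : Prop :=
  [/\
      [/\ (forall a b c, add a (add b c) = add (add a b) c),
          (forall a, add zero a = a /\ add a zero = a) &
          (forall a, exists b, add a b = zero /\ add b a = zero)],
      [/\ (forall a b c, mul a (mul b c) = mul (mul a b) c),
          (forall a, mul one a = a /\ mul a one = a),
          one <> zero,
          (forall a b, a <> zero -> b <> zero -> mul a b <> zero) &
          (forall a, a <> zero ->
             [/\ inv a <> zero, mul (inv a) a = one & mul a (inv a) = one])],
      (forall a, mul zero a = zero) &
      (forall g a b, mul g (add a b) = add (mul g a) (mul g b))].

Definition nearfield_addition_map (F : eqType) (mul : F -> F -> F)
    (one zero m1 : F) (inv : F -> F) (rho : F -> F) : Prop :=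
  [/\ rho zero = one,
      rho m1 = zero,
      (forall a, a <> zero -> rho (inv a) = mul (inv a) (rho a)) &
      (forall a b, a <> zero -> b <> zero ->
         rho (mul a (rho b)) = mul a (rho (mul b (rho (inv (mul a b))))))].

Definition rho_add (F : eqType) (mul : F -> F -> F) (zero : F)
    (inv : F -> F) (rho : F -> F) (a b : F) : F :=
  if a == zero then b else mul a (rho (mul (inv a) b)).

(* Main.v *)
Require Import Defs.
From mathcomp Require Import ssreflect ssrfun ssrbool eqtype.

Theorem mainTheorem14 (F : eqType) (mul : F -> F -> F) (one zero m1 : F)
    (inv : F -> F) :
  scalar_group mul one zero m1 inv ->
  (forall add : F -> F -> F, left_nearfield add mul one zero inv ->
     nearfield_addition_map mul one zero m1 inv (fun a => add one a)) /\
  (forall rho : F -> F, nearfield_addition_map mul one zero m1 inv rho ->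
     left_nearfield (rho_add mul zero inv rho) mul one zero inv).
Proof.
case=> [[mA mI] z1 mz sq [mnz minv]].
have o1 : one <> zero by move=> h; apply: z1.
have inv1 : inv one = one.
  by have [_ h _] := minv one o1; rewrite (proj2 (mI _)) in h.
have invK : forall a, a <> zero -> inv (inv a) = a.
  move=> a ha; have [hi h1 h2] := minv a ha; have [_ h3 h4] := minv (inv a) hi.
  by rewrite -[inv (inv a)](proj2 (mI _)) -h1 mA h3 (proj1 (mI _)).
have invM : forall a b, a <> zero -> b <> zero ->
    inv (mul a b) = mul (inv b) (inv a).
  move=> a b ha hb; have hab := mnz a b ha hb.
  have [_ h1 _] := minv _ hab; have [_ _ ha2] := minv a ha; have [_ _ hb2] := minv b hb.
  have e : mul (mul a b) (mul (inv b) (inv a)) = one.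
    by rewrite -mA (mA b) hb2 (proj1 (mI _)) ha2.
  by rewrite -[inv (mul a b)](proj2 (mI _)) -e mA h1 (proj1 (mI _)).
have mcancel : forall x y, mul x y = y -> y <> zero -> x = one.
  move=> x y h hy; have [_ _ h2] := minv y hy.
  by rewrite -[x](proj2 (mI _)) -h2 mA h.
have m1m1 : mul m1 m1 = one by apply/(sq m1); right.
have m1nz : m1 <> zero.
  by move=> h; apply: z1; rewrite -m1m1 h (proj1 (mz _)).
split.
- move=> add [[aA a0 aInv] _ _ dist].
  have lcanc : forall x y z, add x y = add x z -> y = z.
    move=> x y z h; case: (aInv x) => w [_ hw].
    have e1 : y = add w (add x y) by rewrite aA hw (proj1 (a0 y)).
    by rewrite e1 h aA hw (proj1 (a0 z)).
  have rcanc : forall x y z, add y x = add z x -> y = z.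
    move=> x y z h; case: (aInv x) => w [hw _].
    have e1 : y = add (add y x) w by rewrite -aA hw (proj2 (a0 y)).
    by rewrite e1 h -aA hw (proj2 (a0 z)).
  case: (aInv one) => n [hn1 hn2].
  have xn : forall x, add (mul x n) x = zero.
    move=> x; move: (dist x n one).
    by rewrite hn2 (proj2 (mI x)) (proj2 (mz x)) => <-.
  have nn : mul n n = one by apply: (rcanc n); rewrite xn hn1.
  have nnz : n <> zero by move=> h; apply: z1; rewrite -nn h (proj1 (mz _)).
  have ncent : forall g, mul g n = mul n g.
    move=> g; have [->|/eqP gnz] := eqVneq g zero.
      by rewrite (proj1 (mz _)) (proj2 (mz _)).
    case: ((proj1 (sq n)) nn) => [->|nm1]; first by rewrite (proj1 (mI _)) (proj2 (mI _)).
    have [gi g1 g2] := minv g gnz.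
    have cc : mul (mul (mul g n) (inv g)) (mul (mul g n) (inv g)) = one.
      by rewrite -!mA (mA (inv g) g) g1 (proj1 (mI _)) (mA n n) nn (proj1 (mI _)) g2.
    case: ((proj1 (sq _)) cc) => h.
      have : mul (mul (mul g n) (inv g)) g = mul one g by rewrite h.
      rewrite -mA g1 (proj2 (mI _)) (proj1 (mI _)) => h2.
      have : n = one.
        by rewrite -[n](proj1 (mI _)) -g1 -mA h2 g1.
      by move=> ->; rewrite (proj1 (mI _)) (proj2 (mI _)).
    have : mul (mul (mul g n) (inv g)) g = mul m1 g by rewrite h.
    by rewrite -mA g1 (proj2 (mI _)) -nm1.
  have negx : forall x, add (mul n x) x = zero by move=> x; rewrite -ncent xn.
  have nnx : forall x, mul n (mul n x) = x by move=> x; rewrite mA nn (proj1 (mI _)).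
  have negx' : forall x, add x (mul n x) = zero.
    by move=> x; have := negx (mul n x); rewrite nnx.
  have h1 : forall a b, add (mul n a) (mul n b) = add (mul n b) (mul n a).
    move=> a b; apply: (lcanc (add a b)).
    rewrite -dist negx' -aA (aA b) negx' (proj1 (a0 _)) negx' //.
  have comm : forall a b, add a b = add b a.
    by move=> a b; have := h1 (mul n a) (mul n b); rewrite !nnx.
  split.
  + exact: (proj2 (a0 one)).
  + case: ((proj1 (sq n)) nn) => [e|<- //].
    have e2 : mul m1 (add one m1) = add one m1.
      by rewrite dist (proj2 (mI _)) m1m1 comm.
    have [//|/eqP h] := eqVneq (add one m1) zero.
    by rewrite (mcancel _ _ e2 h) -{1}e.
  + move=> a ha; have [_ h _] := minv a ha.
    by rewrite dist (proj2 (mI _)) h comm.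
  + move=> a b ha hb; have hab := mnz a b ha hb; have [_ _ h] := minv _ hab.
    rewrite dist (proj2 (mI _)) (dist a) (proj2 (mI _)) (dist b) (proj2 (mI _)).
    rewrite (dist a) mA h.
    by rewrite aA (comm one a) -aA (comm one (mul a b)).
- move=> rho [r0 rm1 rinv rmul].
  set ad := rho_add mul zero inv rho.
  have ad0l : forall b, ad zero b = b by move=> b; rewrite /ad /rho_add eqxx.
  have adnz : forall a b, a <> zero -> ad a b = mul a (rho (mul (inv a) b)).
    by move=> a b ha; rewrite /ad /rho_add; case: eqP.
  have ad0r : forall a, ad a zero = a.
    move=> a; have [->|/eqP ha] := eqVneq a zero; first exact: ad0l.
    by rewrite adnz // (proj2 (mz _)) r0 (proj2 (mI _)).
  have ad1 : forall x, ad one x = rho x.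
    by move=> x; rewrite adnz // inv1 !(proj1 (mI _)).
  have dist : forall g a b, mul g (ad a b) = ad (mul g a) (mul g b).
    move=> g a b; have [->|/eqP hg] := eqVneq g zero.
      by rewrite !(proj1 (mz _)) ad0l.
    have [->|/eqP ha] := eqVneq a zero.
      by rewrite ad0l (proj2 (mz _)) ad0l.
    rewrite !adnz // ?invM // ?mA //; last exact: mnz.
    have [_ h _] := minv g hg.
    by rewrite -(mA (inv a)) h (proj2 (mI _)).
  have scale : forall a b, a <> zero -> ad a b = mul a (ad one (mul (inv a) b)).
    move=> a b ha; have [_ _ h] := minv a ha.
    by rewrite dist (proj2 (mI _)) mA h (proj1 (mI _)).
  have C1 : forall x, ad x one = ad one x.
    move=> x; have [->|/eqP hx] := eqVneq x zero; first by rewrite ad0l ad0r.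
    have [hi _ _] := minv x hx.
    rewrite adnz // ad1 (proj2 (mI _)).
    by have := rinv (inv x) hi; rewrite invK // => ->.
  have comm : forall a b, ad a b = ad b a.
    move=> a b; have [->|/eqP ha] := eqVneq a zero; first by rewrite ad0l ad0r.
    have [->|/eqP hb] := eqVneq b zero; first by rewrite ad0l ad0r.
    have [_ _ h] := minv a ha.
    by rewrite (scale a b ha) -C1 dist (proj2 (mI _)) mA h (proj1 (mI _)).
  have A : forall a c, a <> zero -> c <> zero -> ad one (ad a c) = ad a (ad c one).
    move=> a c ha hc; have [hai _ h] := minv a ha.
    have hb : mul (inv a) c <> zero by exact: mnz.
    have := rmul a _ ha hb; rewrite (mA a (inv a) c) h (proj1 (mI _)) => e.
    by rewrite ad1 (adnz a) // e (adnz c) // (proj2 (mI _)) (adnz a) // mA.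
  have assoc1 : forall y z, ad one (ad y z) = ad (ad one y) z.
    move=> y z; have [->|/eqP hy] := eqVneq y zero; first by rewrite ad0l ad0r.
    have [->|/eqP hz] := eqVneq z zero; first by rewrite !ad0r.
    by rewrite (comm (ad one y) z) -(C1 y) -(A z y hz hy) (comm z y).
  have assoc : forall x y z, ad x (ad y z) = ad (ad x y) z.
    move=> x y z; have [->|/eqP hx] := eqVneq x zero; first by rewrite !ad0l.
    have [_ _ h] := minv x hx.
    rewrite (scale x (ad y z) hx) (dist (inv x) y z) assoc1 (dist x) -(scale x y hx).
    by rewrite mA h (proj1 (mI _)).
  split.
  + split.
    * exact: assoc.
    * by move=> a; split; [exact: ad0l | exact: ad0r].
    * move=> a; exists (mul a m1).
      have e : ad a (mul a m1) = zero.
        have [->|/eqP ha] := eqVneq a zero; first by rewrite (proj1 (mz _)) ad0l.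
        have [_ h _] := minv a ha.
        by rewrite adnz // mA h (proj1 (mI _)) rm1 (proj2 (mz _)).
      by split; rewrite // comm.
  + by split.
  + by move=> a; rewrite (proj1 (mz _)).
  + exact: dist.
Qed.
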